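(* Let $S$ and $T$ be bottomed linearly ordered sets and let $\psi\colon S\to T$ satisfy: (1) $\psi$ is isotone; (2) if $\psi(x)=\perp_T$ then $x=\perp_S$; (3) $\psi$ is continuous at $\perp_S$, i.e. for every $\epsilon\in T^*$ there exists $\delta\in S^*$ such that $x<\delta$ implies $\psi(x)<\epsilon$. Let $X$ be a topological space and $d\in\mathrm{Ult}(X;S)$. Then $\psi\circ d\in\mathrm{Ult}(X;T)$, $d$ and $\psi\circ d$ generate the same topology on $X$, and moreover they are uniformly equivalent to each other.
   Context: A bottomed linearly ordered set $S$ has a least element $\perp_S$; $S^*=S\setminus\{\perp_S\}$. A map is isotone if $x\le y$ implies $\psi(x)\le\psi(y)$. An $S$-ultrametric on $X$ is $d\colon X\times X\to S$ with $d(x,y)=\perp_S\iff x=y$, $d(x,y)=d(y,x)$, and $d(x,y)\le\max\{d(x,z),d(z,y)\}$; its topology is generated by the open balls $\{y:d(x,y)<\epsilon\}$, $\epsilon\in S^*$. $\mathrm{Ult}(X;S)$ is the set of $S$-ultrametrics generating the topology of $X$. An $S$-ultrametric $d$ and a $T$-ultrametric $e$ on $X$ are uniformly equivalent if for every $\epsilon\in T^*$ there is $\delta\in S^*$ with $d(x,y)<\delta\Rightarrow e(x,y)<\epsilon$, and for every $\epsilon\in S^*$ there is $\delta\in T^*$ with $e(x,y)<\delta\Rightarrow d(x,y)<\epsilon$. *)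

(* Defs.v *)
From HB Require Import structures.
From mathcomp Require Import all_boot all_order.
From mathcomp Require Import boolp classical_sets topology.
Set Implicit Arguments. Unset Strict Implicit. Unset Printing Implicit Defensive.
Import Order.TTheory.
Local Open Scope order_scope.
Local Open Scope classical_set_scope.

(* A bottomed linearly ordered set is a [bOrderType dS]; its least element is
   [\bot]; S^* = S minus \bot. *)

Definition is_ultrametric {dS} (S : bOrderType dS) (X : Type) (d : X -> X -> S) : Prop :=
  [/\ (forall x y, d x y = \bot <-> x = y),
      (forall x y, d x y = d y x) &
      (forall x y z, d x y <= Order.max (d x z) (d z y))].

Definition uball {dS} (S : bOrderType dS) (X : Type) (d : X -> X -> S) (x : X) (eps : S) : set X :=
  [set y | d x y < eps].

(* open sets of the topology generated by the open balls (eps in S^* ):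
   unions of open balls *)
Definition ult_open {dS} (S : bOrderType dS) (X : Type) (d : X -> X -> S) (U : set X) : Prop :=
  forall x, U x -> exists z (eps : S), eps != \bot /\ uball d z eps x /\ uball d z eps `<=` U.

Definition Ult {dS} (S : bOrderType dS) (X : topologicalType) (d : X -> X -> S) : Prop :=
  is_ultrametric d /\ (forall U : set X, open U <-> ult_open d U).

Definition uniformly_equivalent {dS dT} (S : bOrderType dS) (T : bOrderType dT) (X : Type)
  (d : X -> X -> S) (e : X -> X -> T) : Prop :=
  (forall eps : T, eps != \bot -> exists delta : S, delta != \bot /\
     forall x y, d x y < delta -> e x y < eps) /\
  (forall eps : S, eps != \bot -> exists delta : T, delta != \bot /\
     forall x y, e x y < delta -> d x y < eps).

(* Main.v *)
Require Import Defs.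
From HB Require Import structures.
From mathcomp Require Import all_boot all_order.
From mathcomp Require Import boolp classical_sets topology.
Import Order.TTheory.
Local Open Scope order_scope.
Local Open Scope classical_set_scope.

Lemma open_transfer {dS dT} (S : bOrderType dS) (T : bOrderType dT) (X : Type)
  (d : X -> X -> S) (e : X -> X -> T) :
  is_ultrametric d -> (forall x, e x x = \bot) ->
  (forall eps : S, eps != \bot -> exists delta : T, delta != \bot /\
     forall x y, e x y < delta -> d x y < eps) ->
  forall U, ult_open d U -> ult_open e U.
Proof.
move=> [_ _ tri] ee0 H U hU x Ux.
have [z [eps [eps0 [dzx sub]]]] := hU x Ux.
have [delta [del0 hdel]] := H eps eps0.
exists x, delta; split => //; split.
  by rewrite /uball /= ee0 lt0x.
move=> y /= /hdel dxy; apply: sub; rewrite /uball /=.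
by apply: le_lt_trans (tri z y x) _; rewrite gt_max dzx dxy.
Qed.

Theorem lemma2p36 {dS dT} (S : bOrderType dS) (T : bOrderType dT) (psi : S -> T)
  (psi_iso : forall x y : S, x <= y -> psi x <= psi y)
  (psi_bot : forall x : S, psi x = \bot -> x = \bot)
  (psi_cont : forall eps : T, eps != \bot -> exists delta : S, delta != \bot /\
                forall x : S, x < delta -> psi x < eps)
  (X : topologicalType) (d : X -> X -> S) (hd : Ult d) :
  Ult (fun x y => psi (d x y)) /\
  (forall U : set X, ult_open d U <-> ult_open (fun x y => psi (d x y)) U) /\
  uniformly_equivalent d (fun x y => psi (d x y)).
Proof.
have psib : psi \bot = \bot.
  apply/eqP; apply/negP => /negP hne.
  have [delta [d0 hdl]] := psi_cont _ hne.
  by have := hdl \bot; rewrite lt0x d0 ltxx => /(_ isT).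
have [[d0 dsym dtri] hop] := hd.
have dxx : forall x, d x x = \bot by move=> x; apply/d0.
have ue : uniformly_equivalent d (fun x y => psi (d x y)).
  split.
    move=> eps /psi_cont [delta [dl0 hdl]]; exists delta; split => //.
    by move=> x y /hdl.
  move=> eps eps0; exists (psi eps); split.
    by apply/eqP => /psi_bot /eqP; rewrite (negbTE eps0).
  move=> x y; rewrite ltNge => h; rewrite ltNge; apply: contra h.
  exact: psi_iso.
have um : is_ultrametric (fun x y => psi (d x y)).
  split.
  - move=> x y; split; first by move/psi_bot/d0.
    by move=> ->; rewrite dxx.
  - by move=> x y; rewrite dsym.
  - move=> x y z /=; have := dtri x y z.
    case: (leP (d x z) (d z y)) => h.
      move=> /psi_iso h1; apply: (le_trans h1).
      by rewrite le_max lexx orbT.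
    move=> /psi_iso h1; apply: (le_trans h1).
    by rewrite le_max lexx.
have eqo : forall U : set X, ult_open d U <-> ult_open (fun x y => psi (d x y)) U.
  move=> U; split.
    apply: open_transfer => //; first by move=> x /=; rewrite dxx psib.
    exact: ue.2.
  apply: open_transfer => //.
  exact: ue.1.
split; last by split.
split => // U; rewrite hop; exact: eqo.
Qed.
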